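(* Let $\tau\in(0,\infty]$ and let $\{(\mathbf{x}_i,\mathbf{v}_i)\}_{i=1}^N$ be a solution on $[0,\tau)$ of the Cucker–Smale model with bonding force $$\dot{\mathbf{x}}_i=\mathbf{v}_i,\qquad \dot{\mathbf{v}}_i=\frac{\kappa_0}{N}\sum_{j=1}^N\psi(\|\mathbf{x}_j-\mathbf{x}_i\|)(\mathbf{v}_j-\mathbf{v}_i)+\frac{\kappa_1}{N}\sum_{j\ne i}\Big\langle\mathbf{v}_j-\mathbf{v}_i,\frac{\mathbf{x}_j-\mathbf{x}_i}{\|\mathbf{x}_j-\mathbf{x}_i\|}\Big\rangle\frac{\mathbf{x}_j-\mathbf{x}_i}{\|\mathbf{x}_j-\mathbf{x}_i\|}+\frac{\kappa_2}{N}\sum_{j\ne i}\big(\|\mathbf{x}_j-\mathbf{x}_i\|-d^\infty_{ij}\big)\frac{\mathbf{x}_j-\mathbf{x}_i}{\|\mathbf{x}_j-\mathbf{x}_i\|}.$$ Then for all $t\in[0,\tau)$, $E(t)+\int_0^tP(s)\,ds=E(0)$, where $$P:=\frac{\kappa_0}{2N}\sum_{i,j=1}^N\psi(\|\mathbf{x}_j-\mathbf{x}_i\|)\|\mathbf{v}_j-\mathbf{v}_i\|^2+\frac{\kappa_1}{2N}\sum_{i\ne j}\Big\langle\mathbf{v}_j-\mathbf{v}_i,\frac{\mathbf{x}_j-\mathbf{x}_i}{\|\mathbf{x}_j-\mathbf{x}_i\|}\Big\rangle^2.$$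
   Context: $N\ge 2$, $d\ge1$, $[N]=\{1,\dots,N\}$; Euclidean norm and inner product on $\mathbb{R}^d$; $\kappa_0,\kappa_1,\kappa_2\ge 0$; $[d^\infty_{ij}]$ real symmetric with zero diagonal; $\psi:[0,\infty)\to[0,\infty)$ bounded and locally Lipschitz. A solution is a $C^1$ family with $\mathbf{x}_i(t)\ne\mathbf{x}_j(t)$ for $i\ne j$ satisfying the system. The total energy is $E:=\frac12\sum_{i=1}^N\|\mathbf{v}_i\|^2+\frac{\kappa_2}{4N}\sum_{i,j=1}^N\big(\|\mathbf{x}_j-\mathbf{x}_i\|-d^\infty_{ij}\big)^2$. *)

(* Defs.v *)
From HB Require Import structures.
From mathcomp Require Import all_boot all_order all_algebra.
From mathcomp Require Import all_classical all_reals all_analysis.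
Set Implicit Arguments. Unset Strict Implicit. Unset Printing Implicit Defensive.
Import Order.TTheory GRing.Theory Num.Theory.
Import numFieldNormedType.Exports.
Local Open Scope classical_set_scope.
Local Open Scope ring_scope.

Section CS.
Variables (R : realType) (N d : nat).
Implicit Types (u w : 'rV[R]_d).

Definition edot u w : R := \sum_(k < d) u 0 k * w 0 k.
Definition enorm u : R := Num.sqrt (edot u u).

Definition psi_admissible (psi : R -> R) : Prop :=
  (forall s, 0 <= s -> 0 <= psi s) /\
  (exists M : R, forall s, 0 <= s -> `|psi s| <= M) /\
  (forall a, 0 <= a -> exists r : R, 0 < r /\ exists L : R,
     forall s t, 0 <= s -> 0 <= t -> `|s - a| < r -> `|t - a| < r ->
       `|psi s - psi t| <= L * `|s - t|).

Variables (kap0 kap1 kap2 : R) (psi : R -> R) (dinf : 'I_N -> 'I_N -> R).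

Definition udir (x : 'I_N -> 'rV[R]_d) (i j : 'I_N) : 'rV[R]_d :=
  (enorm (x j - x i))^-1 *: (x j - x i).

Definition cs_rhs (x v : 'I_N -> 'rV[R]_d) (i : 'I_N) : 'rV[R]_d :=
  (kap0 / N%:R) *: (\sum_(j < N) psi (enorm (x j - x i)) *: (v j - v i))
  + (kap1 / N%:R) *: (\sum_(j < N | j != i) edot (v j - v i) (udir x i j) *: udir x i j)
  + (kap2 / N%:R) *: (\sum_(j < N | j != i) (enorm (x j - x i) - dinf i j) *: udir x i j).

Definition cs_energy (x v : 'I_N -> 'rV[R]_d) : R :=
  2^-1 * (\sum_(i < N) enorm (v i) ^+ 2)
  + kap2 / (4 * N%:R) * (\sum_(i < N) \sum_(j < N) (enorm (x j - x i) - dinf i j) ^+ 2).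

Definition cs_dissip (x v : 'I_N -> 'rV[R]_d) : R :=
  kap0 / (2 * N%:R) * (\sum_(i < N) \sum_(j < N) psi (enorm (x j - x i)) * enorm (v j - v i) ^+ 2)
  + kap1 / (2 * N%:R) * (\sum_(i < N) \sum_(j < N | j != i) edot (v j - v i) (udir x i j) ^+ 2).

Definition time_dom (tau : \bar R) : set R := [set t | 0 <= t /\ (t%:E < tau)%E].

Definition cs_solution (tau : \bar R) (x v : 'I_N -> R -> 'rV[R]_d) : Prop :=
  (forall t, t \in time_dom tau -> forall i j, i != j -> x i t != x j t) /\
  (forall i, {within time_dom tau, continuous (x i)}) /\
  (forall i, {within time_dom tau, continuous (v i)}) /\
  (forall t, 0 < t -> (t%:E < tau)%E -> forall i,
     is_derive t 1 (x i) (v i t) /\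
     is_derive t 1 (v i) (cs_rhs (fun j => x j t) (fun j => v j t) i)).

End CS.

(* Main.v *)
Require Import Defs.
From HB Require Import structures.
From mathcomp Require Import all_boot all_order all_algebra.
From mathcomp Require Import all_classical all_reals all_analysis.
From mathcomp Require Import ring lra.
Set Implicit Arguments. Unset Strict Implicit. Unset Printing Implicit Defensive.
Import Order.TTheory GRing.Theory Num.Theory.
Import numFieldNormedType.Exports.
Local Open Scope classical_set_scope.
Local Open Scope ring_scope.

Section Alg.
Variables (R : realType) (d : nat).
Implicit Types (u w z : 'rV[R]_d).

Lemma edotC u w : edot u w = edot w u.
Proof. by apply: eq_bigr => k _; rewrite mulrC. Qed.

Lemma edotDl u w z : edot (u + w) z = edot u z + edot w z.
Proof. by rewrite /edot -big_split; apply: eq_bigr => k _; rewrite mxE mulrDl. Qed.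

Lemma edotZl a u w : edot (a *: u) w = a * edot u w.
Proof. by rewrite /edot mulr_sumr; apply: eq_bigr => k _; rewrite mxE mulrA. Qed.

Lemma edotNl u w : edot (- u) w = - edot u w.
Proof. by rewrite /edot -sumrN; apply: eq_bigr => k _; rewrite mxE mulNr. Qed.

Lemma edotBl u w z : edot (u - w) z = edot u z - edot w z.
Proof. by rewrite edotDl edotNl. Qed.

Lemma edot0l w : edot 0 w = 0.
Proof. by rewrite /edot big1 // => k _; rewrite mxE mul0r. Qed.

Lemma edotDr u w z : edot z (u + w) = edot z u + edot z w.
Proof. by rewrite edotC edotDl !(edotC z). Qed.
Lemma edotZr a u w : edot w (a *: u) = a * edot w u.
Proof. by rewrite edotC edotZl edotC. Qed.
Lemma edotNr u w : edot w (- u) = - edot w u.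
Proof. by rewrite edotC edotNl edotC. Qed.
Lemma edotBr u w z : edot z (u - w) = edot z u - edot z w.
Proof. by rewrite edotDr edotNr. Qed.

Lemma edot_suml (I : Type) (r : seq I) (P : pred I) (f : I -> 'rV[R]_d) w :
  edot (\sum_(j <- r | P j) f j) w = \sum_(j <- r | P j) edot (f j) w.
Proof.
elim: r => [|a r IH]; first by rewrite !big_nil edot0l.
by rewrite !big_cons; case: (P a) => //; rewrite edotDl IH.
Qed.

Lemma edot_sumr (I : Type) (r : seq I) (P : pred I) (f : I -> 'rV[R]_d) w :
  edot w (\sum_(j <- r | P j) f j) = \sum_(j <- r | P j) edot w (f j).
Proof. by rewrite edotC edot_suml; apply: eq_bigr => j _; rewrite edotC. Qed.

Lemma edot_ge0 u : 0 <= edot u u.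
Proof. by apply: sumr_ge0 => k _; rewrite -expr2 sqr_ge0. Qed.

Lemma enorm_sq u : enorm u ^+ 2 = edot u u.
Proof. by rewrite sqr_sqrtr // edot_ge0. Qed.

Lemma enorm0 : enorm (0 : 'rV[R]_d) = 0.
Proof. by rewrite /enorm edot0l sqrtr0. Qed.

Lemma enormN u : enorm (- u) = enorm u.
Proof. by rewrite /enorm edotNl edotNr opprK. Qed.

Lemma enormB u w : enorm (u - w) = enorm (w - u).
Proof. by rewrite -opprB enormN. Qed.

Lemma edot_eq0 u : edot u u = 0 -> u = 0.
Proof.
move=> /eqP; rewrite psumr_eq0; last by move=> k _; rewrite -expr2 sqr_ge0.
move=> /allP H; apply/matrixP => i k; rewrite ord1 mxE.
have := H k (mem_index_enum k); rewrite implyTb mulf_eq0 orbb.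
by move/eqP.
Qed.

Lemma edot_gt0 u : u != 0 -> 0 < edot u u.
Proof.
move=> u0; rewrite lt_def edot_ge0 andbT; apply/eqP => /edot_eq0 H.
by rewrite H eqxx in u0.
Qed.

Lemma enorm_gt0 u : u != 0 -> 0 < enorm u.
Proof. by move=> u0; rewrite /enorm sqrtr_gt0 edot_gt0. Qed.
End Alg.

Lemma sum_sym (R : realType) n (F : 'I_n -> 'I_n -> R) :
  \sum_i \sum_j F i j = 2^-1 * \sum_i \sum_j (F i j + F j i).
Proof.
under [in RHS]eq_bigr do rewrite big_split /=.
rewrite big_split /= [X in _ + X]exchange_big /=.
set S := \sum_i _. by field.
Qed.

Section Alg2.
Variables (R : realType) (N d : nat) (kap0 kap1 kap2 : R) (psi : R -> R)
  (dinf : 'I_N -> 'I_N -> R).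
Hypothesis dsym : forall i j, dinf i j = dinf j i.
Hypothesis d0 : forall i, dinf i i = 0.
Hypothesis N0 : N%:R != 0 :> R.

Lemma udir_swap (X : 'I_N -> 'rV[R]_d) i j : udir X j i = - udir X i j.
Proof. by rewrite /udir enormB -scalerN opprB. Qed.

Lemma energy_algebra (X V : 'I_N -> 'rV[R]_d) :
  2^-1 * (\sum_i (edot (cs_rhs kap0 kap1 kap2 psi dinf X V i) (V i)
                 + edot (V i) (cs_rhs kap0 kap1 kap2 psi dinf X V i)))
  + kap2 / (4 * N%:R) * (\sum_i \sum_j
       (2 * (enorm (X j - X i) - dinf i j) * edot (V j - V i) (udir X i j)))
  = - cs_dissip kap0 kap1 psi X V.
Proof.
pose c i j := edot (V j - V i) (udir X i j).
pose b i j := enorm (X j - X i) - dinf i j.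
pose F0 i j := psi (enorm (X j - X i)) * edot (V i) (V j - V i).
pose F1 i j := if j != i then c i j * edot (V i) (udir X i j) else 0.
pose F2 i j := if j != i then b i j * edot (V i) (udir X i j) else 0.
have E1 : forall i, edot (cs_rhs kap0 kap1 kap2 psi dinf X V i) (V i)
   + edot (V i) (cs_rhs kap0 kap1 kap2 psi dinf X V i)
   = 2 * (kap0 / N%:R * \sum_j F0 i j + kap1 / N%:R * \sum_j F1 i j
          + kap2 / N%:R * \sum_j F2 i j).
  move=> i; rewrite edotC -mulr2n [RHS]mulr_natl; congr (_ *+ 2).
  rewrite /cs_rhs !edotDr !edotZr !edot_sumr.
  congr (_ * _ + _ * _ + _ * _).
  - by apply: eq_bigr => j _; rewrite edotZr.
  - by rewrite big_mkcond; apply: eq_bigr => j _; rewrite /F1; case: ifP => //; rewrite edotZr.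
  - by rewrite big_mkcond; apply: eq_bigr => j _; rewrite /F2; case: ifP => //; rewrite edotZr.
under eq_bigr do rewrite E1.
rewrite -mulr_sumr !big_split /= -!mulr_sumr.
have S0 : \sum_i \sum_j F0 i j
    = 2^-1 * - \sum_i \sum_j psi (enorm (X j - X i)) * enorm (V j - V i) ^+ 2.
  rewrite sum_sym; congr (_ * _); rewrite -sumrN; apply: eq_bigr => i _.
  rewrite -sumrN; apply: eq_bigr => j _; rewrite /F0 (enormB (X i)) enorm_sq.
  rewrite !edotBr !edotBl (edotC (V j) (V i)); ring.
have S1 : \sum_i \sum_j F1 i j
    = 2^-1 * - \sum_i \sum_(j | j != i) edot (V j - V i) (udir X i j) ^+ 2.
  rewrite sum_sym; congr (_ * _); rewrite -sumrN; apply: eq_bigr => i _.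
  rewrite -sumrN [RHS]big_mkcond; apply: eq_bigr => j _; rewrite /F1 (eq_sym i j).
  case: ifP => _; last by rewrite addr0.
  rewrite /c udir_swap !edotNr !edotBl; ring.
have S2 : \sum_i \sum_j F2 i j = 2^-1 * - \sum_i \sum_j b i j * c i j.
  rewrite sum_sym; congr (_ * _); rewrite -sumrN; apply: eq_bigr => i _.
  rewrite -sumrN; apply: eq_bigr => j _; rewrite /F2 (eq_sym i j).
  case: ifP => [_|/negbFE/eqP->]; last by rewrite /b subrr enorm0 d0 subrr mul0r oppr0 addr0.
  rewrite /b /c udir_swap (enormB (X i)) dsym !edotNr !edotBl; ring.
rewrite S0 S1 S2 /cs_dissip.
have -> : \sum_i \sum_j (2 * (enorm (X j - X i) - dinf i j) * edot (V j - V i) (udir X i j))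
   = 2 * \sum_i \sum_j b i j * c i j.
  rewrite mulr_sumr; apply: eq_bigr => i _; rewrite mulr_sumr; apply: eq_bigr => j _.
  by rewrite /b /c mulrA.
set T0 := \sum_i _.
set T1 := \sum_i _.
set T2 := \sum_i _.
by field.
Qed.

End Alg2.

Section Deriv.
Variables (R : realType) (d : nat).

Lemma is_derive_entry (M : R -> 'rV[R]_d) (s : R) (dM : 'rV[R]_d) (k : 'I_d) :
  is_derive s 1 M dM -> is_derive s (1:R) (fun t => M t 0 k) (dM 0 k).
Proof.
move=> [dMe dMv]; have /derivable_mxP Hd := dMe.
apply: DeriveDef; first exact: Hd.
by rewrite -dMv derive_mx // mxE.
Qed.

Lemma is_derive_edot (f g : R -> 'rV[R]_d) (s : R) (df dg : 'rV[R]_d) :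
  is_derive s 1 f df -> is_derive s 1 g dg ->
  is_derive s (1:R) (fun t => edot (f t) (g t)) (edot df (g s) + edot (f s) dg).
Proof.
move=> Hf Hg.
have -> : (fun t => edot (f t) (g t)) = \sum_(k < d) (fun t => f t 0 k * g t 0 k).
  by rewrite fct_sumE.
apply: is_derive_eq.
  apply: is_derive_sum => k.
  exact: (is_deriveM (is_derive_entry k Hf) (is_derive_entry k Hg)).
rewrite /edot -big_split; apply: eq_bigr => k _ /=.
  change (f s 0 k * dg 0 k + g s 0 k * df 0 k = df 0 k * g s 0 k + f s 0 k * dg 0 k).
  by rewrite addrC (mulrC (g s 0 k)).
Qed.

Lemma is_derive_enorm (f : R -> 'rV[R]_d) (s : R) (df : 'rV[R]_d) :
  f s != 0 -> is_derive s 1 f df ->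
  is_derive s (1:R) (fun t => enorm (f t)) (edot df (f s) / enorm (f s)).
Proof.
move=> f0 Hf.
have q0 : 0 < edot (f s) (f s) by exact: edot_gt0.
have e0 : enorm (f s) != 0 by rewrite gt_eqF // enorm_gt0.
have -> : (fun t => enorm (f t)) = Num.sqrt \o (fun t => edot (f t) (f t)) by [].
apply: is_derive_eq.
  apply: is_derive1_comp; last exact: (is_derive_edot Hf Hf).
  exact: is_derive1_sqrt.
rewrite (edotC (f s) df) -/(enorm (f s)).
by field.
Qed.

End Deriv.

Section Deriv2.
Variables (R : realType).

Lemma D_add (f g : R -> R) (s a b : R) :
  is_derive s 1 f a -> is_derive s 1 g b -> is_derive s (1:R) (fun t => f t + g t) (a + b).
Proof. move=> Hf Hg; exact: is_deriveD. Qed.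

Lemma D_sub (f g : R -> R) (s a b : R) :
  is_derive s 1 f a -> is_derive s 1 g b -> is_derive s (1:R) (fun t => f t - g t) (a - b).
Proof. move=> Hf Hg; exact: is_deriveB. Qed.

Lemma D_scale (f : R -> R) (s k a : R) :
  is_derive s 1 f a -> is_derive s (1:R) (fun t => k * f t) (k * a).
Proof. move=> Hf; exact: is_deriveZ. Qed.

Lemma D_sq (f : R -> R) (s a : R) :
  is_derive s 1 f a -> is_derive s (1:R) (fun t => f t ^+ 2) (2 * f s * a).
Proof.
move=> Hf; have -> : (fun t => f t ^+ 2) = (fun t => f t * f t).
  by apply/funext => t; rewrite expr2.
have -> : (fun t => f t * f t) = f * f by [].
have H := is_deriveM Hf Hf. apply: (is_derive_eq H).
change (f s * a + f s * a = 2 * f s * a); by rewrite -mulrA mulr2n mulrDl !mul1r.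
Qed.

Lemma D_cst (c s : R) : is_derive s (1:R) (fun _ => c) 0.
Proof. have H := @is_derive_cst R R R c s 1. apply: (is_derive_eq H). by []. Qed.

Lemma D_opp (f : R -> R) (s a : R) :
  is_derive s 1 f a -> is_derive s (1:R) (fun t => - f t) (- a).
Proof. move=> Hf; exact: is_deriveN. Qed.

Lemma D_sum n (h : 'I_n -> R -> R) (s : R) (dh : 'I_n -> R) :
  (forall i, is_derive s 1 (h i) (dh i)) ->
  is_derive s (1:R) (fun t => \sum_(i < n) h i t) (\sum_(i < n) dh i).
Proof.
move=> H; have -> : (fun t => \sum_(i < n) h i t) = \sum_(i < n) h i by rewrite fct_sumE.
exact: is_derive_sum.
Qed.

Lemma D_vsub (d : nat) (f g : R -> 'rV[R]_d) (s : R) (a b : 'rV[R]_d) :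
  is_derive s 1 f a -> is_derive s 1 g b -> is_derive s (1:R) (fun t => f t - g t) (a - b).
Proof. move=> Hf Hg; exact: is_deriveB. Qed.

End Deriv2.

Lemma energy_deriv (R : realType) (N d : nat) (kap0 kap1 kap2 : R) (psi : R -> R)
  (dinf : 'I_N -> 'I_N -> R) (x v : 'I_N -> R -> 'rV[R]_d) (s : R) :
  (forall i j, dinf i j = dinf j i) -> (forall i, dinf i i = 0) -> N%:R != 0 :> R ->
  (forall i j, i != j -> x i s != x j s) ->
  (forall i, is_derive s 1 (x i) (v i s)) ->
  (forall i, is_derive s 1 (v i)
      (cs_rhs kap0 kap1 kap2 psi dinf (fun j => x j s) (fun j => v j s) i)) ->
  is_derive s (1:R) (fun t => cs_energy kap2 dinf (fun i => x i t) (fun i => v i t))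
    (- cs_dissip kap0 kap1 psi (fun i => x i s) (fun i => v i s)).
Proof.
move=> dsym d0 N0 dist Hx Hv.
have -> : (fun t => cs_energy kap2 dinf (fun i => x i t) (fun i => v i t)) =
  (fun t => 2^-1 * \sum_i edot (v i t) (v i t) + kap2 / (4 * N%:R) *
     \sum_i \sum_j (enorm (x j t - x i t) - dinf i j) ^+ 2).
  by apply/funext => t; rewrite /cs_energy; under eq_bigr do rewrite enorm_sq.
have key : forall i j, is_derive s (1:R)
    (fun t => (enorm (x j t - x i t) - dinf i j) ^+ 2)
    (2 * (enorm (x j s - x i s) - dinf i j) * edot (v j s - v i s) (udir (fun k => x k s) i j)).
  move=> i j.
  have [<-|ij] := eqVneq i j.
    have -> : (fun t => (enorm (x i t - x i t) - dinf i i) ^+ 2) = (fun _ => (0 - dinf i i) ^+ 2).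
      by apply/funext => t; rewrite subrr enorm0.
    apply: (is_derive_eq (D_cst _ _)).
    by rewrite subrr enorm0 d0 subrr mulr0 mul0r.
  have H1 : is_derive s (1:R) (fun t => enorm (x j t - x i t))
      (edot (v j s - v i s) (x j s - x i s) / enorm (x j s - x i s)).
    apply: is_derive_enorm.
    by rewrite subr_eq0 eq_sym dist.
  have H2 := D_sq (D_sub H1 (D_cst (dinf i j) s)).
  apply: (is_derive_eq H2).
  by rewrite subr0 /udir edotZr [X in _ * X]mulrC.
apply: is_derive_eq.
  apply: D_add; apply: D_scale; apply: D_sum => i.
    exact: is_derive_edot.
  by apply: D_sum => j; exact: key.
exact: energy_algebra.
Qed.

Section Cont.
Variables (R : realType).
Context (F : set_system R) {FF : Filter F}.

Lemma C_entry d (f : R -> 'rV[R]_d) (l : 'rV[R]_d) (k : 'I_d) :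
  f @ F --> l -> (fun t => f t 0 k) @ F --> l 0 k.
Proof.
move=> H; exact: (@continuous_cvg _ _ _ F FF f (fun M : 'rV[R]_d => M 0 k) l
  (@coord_continuous _ 1 d 0 k l) H).
Qed.

Lemma C_add (V : normedModType R) (f g : R -> V) (a b : V) :
  f @ F --> a -> g @ F --> b -> (fun t => f t + g t) @ F --> a + b.
Proof. move=> Hf Hg; exact: (cvgD Hf Hg). Qed.

Lemma C_sub (V : normedModType R) (f g : R -> V) (a b : V) :
  f @ F --> a -> g @ F --> b -> (fun t => f t - g t) @ F --> a - b.
Proof. move=> Hf Hg; exact: (cvgB Hf Hg). Qed.

Lemma C_cst (V : normedModType R) (a : V) : (fun _ : R => a) @ F --> a.
Proof. exact: cvg_cst. Qed.

Lemma C_mul (f g : R -> R) (a b : R) :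
  f @ F --> a -> g @ F --> b -> (fun t => f t * g t) @ F --> a * b.
Proof. move=> Hf Hg; exact: (cvgM Hf Hg). Qed.

Lemma C_scale (V : normedModType R) (f : R -> R) (g : R -> V) (a : R) (b : V) :
  f @ F --> a -> g @ F --> b -> (fun t => f t *: g t) @ F --> a *: b.
Proof. move=> Hf Hg; exact: (cvgZ Hf Hg). Qed.

Lemma C_inv (f : R -> R) (a : R) :
  a != 0 -> f @ F --> a -> (fun t => (f t)^-1) @ F --> a^-1.
Proof. move=> a0 Hf; exact: (cvgV a0 Hf). Qed.

Lemma C_comp (f : R -> R) (h : R -> R) (a : R) :
  {for a, continuous h} -> f @ F --> a -> (fun t => h (f t)) @ F --> h a.
Proof. move=> Hh Hf; exact: (@continuous_cvg _ _ _ F FF f h a Hh Hf). Qed.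

Lemma C_sum (V : normedModType R) (I : Type) (r : seq I) (P : pred I)
  (h : I -> R -> V) (l : I -> V) :
  (forall i, P i -> h i @ F --> l i) ->
  (fun t => \sum_(i <- r | P i) h i t) @ F --> \sum_(i <- r | P i) l i.
Proof.
move=> H; elim: r => [|a r IH].
  rewrite big_nil; under eq_fun do rewrite big_nil; exact: C_cst.
rewrite big_cons; under eq_fun do rewrite big_cons.
case Pa: (P a) => //; exact: C_add (H a Pa) IH.
Qed.

Lemma C_edot d (f g : R -> 'rV[R]_d) (a b : 'rV[R]_d) :
  f @ F --> a -> g @ F --> b -> (fun t => edot (f t) (g t)) @ F --> edot a b.
Proof.
move=> Hf Hg; rewrite /edot; apply: C_sum => k _.
exact: (C_mul (C_entry (k:=k) Hf) (C_entry (k:=k) Hg)).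
Qed.

Lemma C_enorm d (f : R -> 'rV[R]_d) (a : 'rV[R]_d) :
  f @ F --> a -> (fun t => enorm (f t)) @ F --> enorm a.
Proof.
move=> Hf; rewrite /enorm; apply: (C_comp (h := Num.sqrt)).
  exact: sqrt_continuous.
exact: C_edot.
Qed.

End Cont.

Lemma psi_cont (R : realType) (psi : R -> R) :
  psi_admissible psi -> continuous (fun s : R => psi `|s|).
Proof.
move=> [_ [_ Hl]] a.
have [r [r0 [L HL]]] := Hl `|a| (normr_ge0 a).
apply/cvgrPdist_lt => e e0.
pose del := Num.min r (e / (`|L| + 1)).
have del0 : 0 < del by rewrite lt_min r0 divr_gt0 // ltr_wpDl.
apply/nbhs_ballP; exists del => // y /=.
rewrite /ball /= lt_min => /andP[yr ye].
have H1 : `| `|y| - `|a| | < r.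
  by apply: le_lt_trans yr; rewrite distrC; apply: ler_dist_dist.
have := HL `|a| `|y| (normr_ge0 _) (normr_ge0 _); rewrite subrr normr0 => /(_ r0 H1) H2.
apply: le_lt_trans H2 _.
have L1 : L <= `|L| + 1 by rewrite (le_trans (ler_norm L)) // lerDl.
have L0 : 0 <= `|L| + 1 by rewrite addr_ge0.
apply: (@le_lt_trans _ _ ((`|L| + 1) * `|a - y|)).
  apply: (@le_trans _ _ ((`|L| + 1) * `| `|a| - `|y| |)).
    by apply: ler_wpM2r.
  by apply: ler_wpM2l => //; exact: ler_dist_dist.
by rewrite mulrC -ltr_pdivlMr // ltr_wpDl.
Qed.

Section Cont2.
Variables (R : realType) (N d : nat) (kap0 kap1 kap2 : R) (psi : R -> R)
  (dinf : 'I_N -> 'I_N -> R).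
Hypothesis psiA : psi_admissible psi.
Context (F : set_system R) {FF : Filter F}.

Lemma C_sq (f : R -> R) (a : R) : f @ F --> a -> (fun t => f t ^+ 2) @ F --> a ^+ 2.
Proof.
move=> Hf; rewrite expr2.
have -> : (fun t => f t ^+ 2) = (fun t => f t * f t) by apply/funext => t; rewrite expr2.
have HH := C_mul Hf Hf. exact: HH.
Qed.

Lemma C_cmul (f : R -> R) (c a : R) : f @ F --> a -> (fun t => c * f t) @ F --> c * a.
Proof. move=> Hf; have Hc : (fun _ : R => c) @ F --> c by exact: cvg_cst.
have HH := C_mul Hc Hf; exact: HH. Qed.

Lemma C_psi (f : R -> R) (a : R) :
  (forall t, 0 <= f t) -> 0 <= a -> f @ F --> a -> (fun t => psi (f t)) @ F --> psi a.
Proof.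
move=> f0 a0 Hf.
have Hc : {for a, continuous (fun s : R => psi `|s|)} by apply: psi_cont.
have := C_comp Hc Hf.
rewrite ger0_norm //.
have -> : (fun t => psi (f t)) = (fun t => psi `|f t|) by apply/funext => t; rewrite ger0_norm.
by apply.
Qed.

Variables (x v : 'I_N -> R -> 'rV[R]_d) (s0 : R).
Hypothesis Hx : forall i, x i @ F --> x i s0.
Hypothesis Hv : forall i, v i @ F --> v i s0.
Hypothesis dist : forall i j, i != j -> x i s0 != x j s0.

Lemma enorm_ge0 (u : 'rV[R]_d) : 0 <= enorm u.
Proof. exact: sqrtr_ge0. Qed.

Lemma C_dissip :
  (fun t => cs_dissip kap0 kap1 psi (fun i => x i t) (fun i => v i t)) @ F -->
  cs_dissip kap0 kap1 psi (fun i => x i s0) (fun i => v i s0).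
Proof.
rewrite /cs_dissip; apply: C_add; apply: C_cmul; apply: C_sum => i _;
  apply: C_sum => j ji.
  apply: C_mul.
    apply: C_psi => //; [by move=> t; exact: enorm_ge0| exact: enorm_ge0|].
    by have HH := C_enorm (C_sub (@Hx j) (@Hx i)); exact: HH.
  by have HH := C_sq (C_enorm (C_sub (@Hv j) (@Hv i))); exact: HH.
apply: C_sq; apply: C_edot; first by have HH := C_sub (@Hv j) (@Hv i); exact: HH.
rewrite /udir; apply: C_scale; last by have HH := C_sub (@Hx j) (@Hx i); exact: HH.
apply: C_inv; last by have HH := C_enorm (C_sub (@Hx j) (@Hx i)); exact: HH.
by rewrite gt_eqF // enorm_gt0 // subr_eq0 dist // eq_sym.
Qed.

Lemma C_energy :
  (fun t => cs_energy kap2 dinf (fun i => x i t) (fun i => v i t)) @ F -->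
  cs_energy kap2 dinf (fun i => x i s0) (fun i => v i s0).
Proof.
rewrite /cs_energy; apply: C_add; apply: C_cmul; apply: C_sum => i _.
  by have HH := C_sq (C_enorm (@Hv i)); exact: HH.
apply: C_sum => j _; apply: C_sq; apply: C_sub; last exact: C_cst.
by have HH := C_enorm (C_sub (@Hx j) (@Hx i)); exact: HH.
Qed.

End Cont2.

Unset Implicit Arguments.

Theorem proposition2p3 (R : realType) (N d : nat) (kap0 kap1 kap2 : R)
  (psi : R -> R) (dinf : 'I_N -> 'I_N -> R) (tau : \bar R)
  (x v : 'I_N -> R -> 'rV[R]_d) :
  (2 <= N)%N -> (1 <= d)%N ->
  0 <= kap0 -> 0 <= kap1 -> 0 <= kap2 ->
  (forall i j, dinf i j = dinf j i) -> (forall i, dinf i i = 0) ->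
  psi_admissible psi ->
  (0 < tau)%E ->
  cs_solution kap0 kap1 kap2 psi dinf tau x v ->
  forall t, 0 <= t -> (t%:E < tau)%E ->
    ((cs_energy kap2 dinf (fun i => x i t) (fun i => v i t))%:E
     + \int[lebesgue_measure]_(s in `[0%R, t]%classic)
         (cs_dissip kap0 kap1 psi (fun i => x i s) (fun i => v i s))%:E
     = (cs_energy kap2 dinf (fun i => x i 0) (fun i => v i 0))%:E)%E.
Proof.
move=> N2 _ _ _ _ dsym d0 psiA _ [Hdist [Hxc [Hvc Hder]]] t t0 ttau.
have N0 : N%:R != 0 :> R by rewrite pnatr_eq0 -lt0n (leq_trans _ N2).
move: t0; rewrite le_eqVlt => /predU1P[<-|tpos].
  by rewrite set_itv1 integral_set1 adde0.
set E := fun s => cs_energy kap2 dinf (fun i => x i s) (fun i => v i s).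
set P := fun s => cs_dissip kap0 kap1 psi (fun i => x i s) (fun i => v i s).
have sub : `[0, t] `<=` time_dom tau.
  move=> s /=; rewrite in_itv /= => /andP[s0 st]; split => //.
  by rewrite (le_lt_trans _ ttau) // lee_fin.
have cx i : {within `[0, t], continuous (x i)} := continuous_subspaceW sub (Hxc i).
have cv i : {within `[0, t], continuous (v i)} := continuous_subspaceW sub (Hvc i).
have lim s0 : `[0, t]%classic s0 ->
   [/\ forall i, x i @ within `[0, t] (nbhs s0) --> x i s0,
       forall i, v i @ within `[0, t] (nbhs s0) --> v i s0 &
       forall i j, i != j -> x i s0 != x j s0].
  move=> Hs0; split.
  - by move=> i; move/subspace_continuousP: (cx i); apply.
  - by move=> i; move/subspace_continuousP: (cv i); apply.
  - by move=> i j ij; apply: Hdist => //; rewrite inE; exact: sub.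
have cP : {within `[0, t], continuous P}.
  apply/subspace_continuousP => s0 Hs0; have [H1 H2 H3] := lim s0 Hs0.
  exact: C_dissip.
have cE : {within `[0, t], continuous E}.
  apply/subspace_continuousP => s0 Hs0; have [H1 H2 H3] := lim s0 Hs0.
  exact: C_energy.
have dE s : 0 < s < t -> is_derive s (1:R) E (- P s).
  move=> /andP[s0 st].
  have stau : (s%:E < tau)%E by rewrite (lt_trans _ ttau) // lte_fin.
  apply: energy_deriv => //.
  - move=> i j ij; apply: Hdist => //; rewrite inE; split; [exact: ltW|exact: stau].
  - by move=> i; case: (Hder s s0 stau i).
  - by move=> i; case: (Hder s s0 stau i).
have dF : derivable_oo_LRcontinuous (fun s => - E s) 0 t.
  have [_ l0 lt] := (continuous_within_itvP _ tpos).1 cE.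
  split.
  - move=> s; rewrite in_itv /= => Hs.
    by case: (D_opp (dE s Hs)).
  - exact: (cvgN l0).
  - exact: (cvgN lt).
have F'f : {in `]0, t[, derive1 (fun s => - E s) =1 P}.
  move=> s; rewrite in_itv /= => Hs.
  rewrite derive1E; case: (D_opp (dE s Hs)) => _ ->.
  by rewrite opprK.
rewrite (continuous_FTC2 tpos cP dF F'f).
rewrite -EFinB -EFinD; congr EFin.
rewrite /E; ring.
Qed.
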